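(* Let $e[r]$ be an affine function of $r$ with $e[1]>0$ and $e[-1]>0$. The set $U$ is convex and its closure splits as $\overline U=K_-'\cup\overline U_0\cup K_+'$. In particular $K\subset\overline U$.
   Context: Let $n\ge2$, $\mathcal S_0^{n\times n}$ the trace-free symmetric matrices, $Z:=\mathbb{R}\times\mathbb{R}^n\times\mathbb{R}^n\times\mathcal S_0^{n\times n}\times\mathbb{R}$ with elements $z=(\rho,v,m,\sigma,p)$. $K:=\{z:\rho\in\{\pm1\},m=\rho v,v\otimes v-\sigma=e[\rho]\mathrm{Id}\}$. For $\rho\in(-1,1)$: $M(z)=\frac{v\otimes v-\rho(m\otimes v+v\otimes m)+m\otimes m}{1-\rho^2}-\sigma$, $Q(z)=\lambda_{\max}(M(z))$, $T_\pm(z)=\frac{|m\pm v|^2}{n(\rho\pm1)^2}$. $U:=\{z:\rho\in(-1,1),T_\pm(z)<e[\pm1],Q(z)<e[\rho]\}$, $\overline U_0:=\{z:\rho\in(-1,1),T_\pm(z)\le e[\pm1],Q(z)\le e[\rho]\}$, $K_\pm':=\{z:\rho=\pm1,m=\pm v,\lambda_{\max}(v\otimes v-\sigma)\le e[\pm1]\}$. *)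

(* Defs.v *)
From mathcomp Require Import all_boot all_algebra all_classical all_reals all_analysis.
Set Implicit Arguments. Unset Strict Implicit. Unset Printing Implicit Defensive.
Import GRing.Theory Num.Theory.
Import numFieldNormedType.Exports.
Local Open Scope ring_scope.
Local Open Scope classical_set_scope.

(* Z = R x R^n x R^n x S_0^{nxn} x R.  Row vectors stand for R^n; the matrix
   component ranges over all of 'M_n, and every set below additionally
   requires it to be symmetric and trace-free. *)
Definition Z (R : realType) (n : nat) :=
  (R * 'rV[R]_n * 'rV[R]_n * 'M[R]_n * R)%type.

Section Defs.
Variables (R : realType) (n : nat).

Definition S0 (s : 'M[R]_n) : Prop := s^T = s /\ \tr s = 0.

(* tensor product a (x) b = a b^T (vectors stored as rows) *)
Definition tens (a b : 'rV[R]_n) : 'M[R]_n := a^T *m b.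

Definition sqnorm (u : 'rV[R]_n) : R := \sum_(i < n) u 0 i ^+ 2.

Definition lambda_max (A : 'M[R]_n) : R := sup [set a : R | eigenvalue A a].

Definition Mz (z : Z R n) : 'M[R]_n :=
  let: (rho, v, m, s, p) := z in
  (1 - rho ^+ 2)^-1 *: (tens v v - rho *: (tens m v + tens v m) + tens m m) - s.

Definition Qz (z : Z R n) : R := lambda_max (Mz z).

Definition Tplus (z : Z R n) : R :=
  let: (rho, v, m, s, p) := z in sqnorm (m + v) / (n%:R * (rho + 1) ^+ 2).

Definition Tminus (z : Z R n) : R :=
  let: (rho, v, m, s, p) := z in sqnorm (m - v) / (n%:R * (rho - 1) ^+ 2).

Variable e : R -> R.

Definition Kset : set (Z R n) :=
  [set z | let: (rho, v, m, s, p) := z in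
     S0 s /\ (rho = 1 \/ rho = -1) /\ m = rho *: v /\
     tens v v - s = e rho *: 1%:M].

Definition Uset : set (Z R n) :=
  [set z | let: (rho, v, m, s, p) := z in
     S0 s /\ -1 < rho < 1 /\ Tplus z < e 1 /\ Tminus z < e (-1) /\ Qz z < e rho].

Definition U0bar : set (Z R n) :=
  [set z | let: (rho, v, m, s, p) := z in
     S0 s /\ -1 < rho < 1 /\ Tplus z <= e 1 /\ Tminus z <= e (-1) /\ Qz z <= e rho].

Definition Kplus' : set (Z R n) :=
  [set z | let: (rho, v, m, s, p) := z in
     S0 s /\ rho = 1 /\ m = v /\ lambda_max (tens v v - s) <= e 1].

Definition Kminus' : set (Z R n) :=
  [set z | let: (rho, v, m, s, p) := z in
     S0 s /\ rho = -1 /\ m = - v /\ lambda_max (tens v v - s) <= e (-1)].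

End Defs.

Definition affine (R : realType) (e : R -> R) : Prop :=
  exists a b : R, forall r, e r = a + b * r.

Definition convex_in (R : realType) (n : nat) (A : set (Z R n)) : Prop :=
  forall (z w : Z R n) (t : R), A z -> A w -> 0 <= t <= 1 ->
    A (t *: z + (1 - t) *: w).

(* Main.v *)
Require Import Defs.
From mathcomp Require Import all_boot all_algebra all_classical all_reals all_analysis.
From mathcomp Require Import ring lra.
Import order.Order.TTheory.
Set Implicit Arguments. Unset Strict Implicit. Unset Printing Implicit Defensive.
Import GRing.Theory Num.Theory.
Import numFieldNormedType.Exports.
Local Open Scope ring_scope.
Local Open Scope classical_set_scope.

Section Alg.
Variables (R : realType) (n : nat).
Implicit Types (x y a b : 'rV[R]_n) (A B : 'M[R]_n).

Definition dot x a : R := \sum_(i < n) x 0 i * a 0 i.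
Definition qf A x : R := (x *m A *m x^T) 0 0.

Lemma dotC x a : dot x a = dot a x.
Proof. by apply: eq_bigr => i _; rewrite mulrC. Qed.
Lemma dotDr x a b : dot x (a + b) = dot x a + dot x b.
Proof. by rewrite /dot -big_split; apply: eq_bigr => i _; rewrite mxE mulrDr. Qed.
Lemma dotZr x (c : R) a : dot x (c *: a) = c * dot x a.
Proof. by rewrite /dot mulr_sumr; apply: eq_bigr => i _; rewrite mxE mulrCA. Qed.
Lemma dotNr x a : dot x (- a) = - dot x a.
Proof. by rewrite -scaleN1r dotZr mulN1r. Qed.
Lemma dotBr x a b : dot x (a - b) = dot x a - dot x b.
Proof. by rewrite dotDr dotNr. Qed.
Lemma dot0r x : dot x 0 = 0.
Proof. by rewrite /dot big1 // => i _; rewrite mxE mulr0. Qed.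
Lemma dotDl x a b : dot (a + b) x = dot a x + dot b x.
Proof. by rewrite dotC dotDr !(dotC x). Qed.
Lemma dotZl x (c : R) a : dot (c *: a) x = c * dot a x.
Proof. by rewrite dotC dotZr dotC. Qed.
Lemma dotNl x a : dot (- a) x = - dot a x.
Proof. by rewrite dotC dotNr dotC. Qed.
Lemma dot0l x : dot 0 x = 0.
Proof. by rewrite dotC dot0r. Qed.

Lemma sqnorm_dot x : sqnorm x = dot x x.
Proof. by apply: eq_bigr => i _; rewrite expr2. Qed.

Lemma sqnorm_ge0 x : 0 <= sqnorm x.
Proof. by apply: sumr_ge0 => i _; rewrite sqr_ge0. Qed.

Lemma sqnorm_eq0 x : sqnorm x = 0 -> x = 0.
Proof.
move=> /eqP; rewrite /sqnorm psumr_eq0; last by move=> i _; rewrite sqr_ge0.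
move=> /allP H; apply/matrixP => i j; rewrite ord1 mxE.
by have := H j (mem_index_enum j); rewrite implyTb sqrf_eq0 => /eqP.
Qed.

Lemma sqnorm_le0 x : sqnorm x <= 0 -> x = 0.
Proof. by move=> h; apply: sqnorm_eq0; apply/eqP; rewrite eq_le h sqnorm_ge0. Qed.

Lemma sqnorm_gt0 x : x != 0 -> 0 < sqnorm x.
Proof.
move=> x0; rewrite lt_def sqnorm_ge0 andbT; apply/eqP => /sqnorm_eq0 h.
by rewrite h eqxx in x0.
Qed.

Lemma sqnorm0 : sqnorm (0 : 'rV[R]_n) = 0.
Proof. by rewrite sqnorm_dot dot0r. Qed.

Lemma sqnormZ (c : R) x : sqnorm (c *: x) = c ^+ 2 * sqnorm x.
Proof. by rewrite !sqnorm_dot dotZr dotZl mulrA expr2. Qed.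

Lemma sqnorm_comb (t : R) a b : sqnorm (t *: a + (1 - t) *: b) =
  t ^+ 2 * sqnorm a + 2 * t * (1 - t) * dot a b + (1 - t) ^+ 2 * sqnorm b.
Proof.
rewrite !sqnorm_dot !dotDr !dotDl !dotZr !dotZl (dotC b a); ring.
Qed.

Lemma mx11E (M : 'M[R]_(1, n)) (N : 'M[R]_(n, 1)) : (M *m N) 0 0 = \sum_i M 0 i * N i 0.
Proof. by rewrite mxE. Qed.

Lemma dot_mx x a : (x *m a^T) 0 0 = dot x a.
Proof. by rewrite mxE; apply: eq_bigr => i _; rewrite mxE. Qed.

Lemma qf_tens a b x : qf (tens a b) x = dot x a * dot x b.
Proof.
rewrite /qf /tens.
have -> : x *m (a^T *m b) *m x^T = (x *m a^T) *m (b *m x^T) by rewrite !mulmxA.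
rewrite mxE big_ord1 dot_mx; congr (_ * _).
by rewrite dot_mx dotC.
Qed.

Lemma qfD A B x : qf (A + B) x = qf A x + qf B x.
Proof. by rewrite /qf mulmxDr mulmxDl mxE. Qed.
Lemma qfZ (c : R) A x : qf (c *: A) x = c * qf A x.
Proof. by rewrite /qf -scalemxAr -scalemxAl mxE. Qed.
Lemma qfN A x : qf (- A) x = - qf A x.
Proof. by rewrite -scaleN1r qfZ mulN1r. Qed.
Lemma qfB A B x : qf (A - B) x = qf A x - qf B x.
Proof. by rewrite qfD qfN. Qed.
Lemma qf_scalar (c : R) x : qf (c%:M) x = c * sqnorm x.
Proof. by rewrite /qf mul_mx_scalar -scalemxAl mxE dot_mx sqnorm_dot. Qed.
Lemma qf_sc1 (c : R) x : qf (c *: 1%:M) x = c * sqnorm x.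
Proof. by rewrite qfZ qf_scalar mul1r. Qed.
Lemma qfZx (c : R) A x : qf A (c *: x) = c ^+ 2 * qf A x.
Proof. by rewrite /qf linearZ /= -scalemxAr -!scalemxAl !mxE expr2 mulrA. Qed.
Lemma qf0x A : qf A 0 = 0.
Proof. by rewrite /qf mul0mx mul0mx mxE. Qed.

Definition bil A x y : R := (x *m A *m y^T) 0 0.
Lemma qfDx A x y : qf A (x + y) = qf A x + bil A x y + bil A y x + qf A y.
Proof.
rewrite /qf /bil linearD /= !mulmxDl !mulmxDr !mxE; ring.
Qed.
Lemma bil_sym A x y : A^T = A -> bil A x y = bil A y x.
Proof.
move=> sA; rewrite /bil.
have -> : (x *m A *m y^T) 0 0 = ((x *m A *m y^T)^T) 0 0 by rewrite [RHS]mxE.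
by rewrite !trmx_mul trmxK sA mulmxA.
Qed.
Lemma bilZr A x (c : R) y : bil A x (c *: y) = c * bil A x y.
Proof. by rewrite /bil linearZ /= -scalemxAr mxE. Qed.


Lemma eig_qf A v (a : R) : v *m A = a *: v -> qf A v = a * sqnorm v.
Proof. by move=> hv; rewrite /qf hv -scalemxAl mxE dot_mx sqnorm_dot. Qed.

End Alg.

Section Topo.
Variable R : realType.

Lemma cont_sum {T : topologicalType} k (f : 'I_k -> T -> R) :
  (forall i, continuous (f i)) -> continuous (fun z => \sum_(i < k) f i z).
Proof.
elim: k f => [|k IH] f hf.
  have -> : (fun z => \sum_(i < 0) f i z) = (fun=> 0) by apply: funext => z; rewrite big_ord0.
  exact: cst_continuous.
have -> : (fun z => \sum_(i < k.+1) f i z) = (fun z => \sum_(i < k) f (widen_ord (leqnSn k) i) z + f ord_max z).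
  by apply: funext => z; rewrite big_ord_recr.
move=> z; apply: (@continuousD _ R^o _ (fun z => \sum_(i < k) f (widen_ord (leqnSn k) i) z) (f ord_max)).
  by apply: (IH (fun i => f (widen_ord (leqnSn k) i))) => i; exact: hf.
exact: hf.
Qed.

Lemma cont_mul {T : topologicalType} (f g : T -> R) :
  continuous f -> continuous g -> continuous (fun z => f z * g z).
Proof. move=> hf hg z; have := @continuousM R T f g z (hf z) (hg z). exact. Qed.

Lemma cont_add {T : topologicalType} (f g : T -> R) :
  continuous f -> continuous g -> continuous (fun z => f z + g z).
Proof. move=> hf hg z; have := @continuousD _ R^o _ f g z (hf z) (hg z). exact. Qed.

Lemma cont_opp {T : topologicalType} (f : T -> R) :
  continuous f -> continuous (fun z => - f z).
Proof. move=> hf z; have := @continuousN _ R^o _ f z (hf z). exact. Qed.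

Lemma closed_lefun {T : topologicalType} (f g : T -> R) :
  continuous f -> continuous g -> closed [set z | f z <= g z].
Proof.
move=> hf hg.
have -> : [set z | f z <= g z] = (fun z => g z + - f z) @^-1` [set x | 0 <= x].
  by apply/seteqP; split => z /=; rewrite subr_ge0.
apply: preimage_closed; last exact: closed_ge.
by move=> z _; apply: cont_add => //; exact: cont_opp.
Qed.

Lemma closed_eqfun {T : topologicalType} (f g : T -> R) :
  continuous f -> continuous g -> closed [set z | f z = g z].
Proof.
move=> hf hg.
have -> : [set z | f z = g z] = [set z | f z <= g z] `&` [set z | g z <= f z].
  by apply/seteqP; split => z /=; [move=> ->; rewrite lexx | case=> h1 h2; apply/eqP; rewrite eq_le h1 h2].
by apply: closedI; apply: closed_lefun.
Qed.

Lemma closed_forall {T : topologicalType} {I : Type} (P : I -> T -> Prop) :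
  (forall i, closed [set z | P i z]) -> closed [set z | forall i, P i z].
Proof.
move=> hP z hz i; apply: (hP i).
by apply: (closureS _ hz) => w /=; apply.
Qed.

Variable n : nat.

Lemma sqnorm_cont : continuous (@sqnorm R n).
Proof.
apply: cont_sum => i.
have -> : (fun x : 'rV[R]_n => x 0 i ^+ 2) = (fun x => x 0 i * x 0 i) by apply: funext => x; rewrite expr2.
by apply: cont_mul; exact: coord_continuous.
Qed.

Lemma dot_cont (x : 'rV[R]_n) : continuous (@dot R n x).
Proof. by apply: cont_sum => i; apply: cont_mul; [exact: cst_continuous|exact: coord_continuous]. Qed.

Lemma qf_expand (A : 'M[R]_n) x : qf A x = \sum_j (\sum_i x 0 i * A i j) * x 0 j.
Proof. by rewrite /qf mxE; apply: eq_bigr => j _; rewrite !mxE. Qed.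

Lemma qf_cont_x (A : 'M[R]_n) : continuous (qf A).
Proof.
have -> : qf A = (fun x => \sum_j (\sum_i x 0 i * A i j) * x 0 j) by apply: funext => x; rewrite qf_expand.
apply: cont_sum => j; apply: cont_mul; last exact: coord_continuous.
apply: cont_sum => i; apply: cont_mul; [exact: coord_continuous|exact: cst_continuous].
Qed.

Lemma qf_cont_A (x : 'rV[R]_n) : continuous (fun A => qf A x).
Proof.
have -> : (fun A => qf A x) = (fun A => \sum_j (\sum_i x 0 i * A i j) * x 0 j) by apply: funext => A; rewrite qf_expand.
apply: cont_sum => j; apply: cont_mul; last exact: cst_continuous.
apply: cont_sum => i; apply: cont_mul; [exact: cst_continuous|exact: coord_continuous].
Qed.

End Topo.

Section Delta.
Variables (R : realType) (n : nat).
Implicit Types (v x : 'rV[R]_n) (A : 'M[R]_n).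
Definition delta (i : 'I_n) : 'rV[R]_n := \row_j ((j == i)%:R).

Lemma qf_delta A i : qf A (delta i) = A i i.
Proof.
rewrite qf_expand (bigD1 i) //= [X in _ + X]big1 => [|j hj]; last first.
  by rewrite [delta i 0 j]mxE (negbTE hj) mulr0.
rewrite [delta i 0 i]mxE eqxx mulr1 addr0 (bigD1 i) //= [X in _ + X]big1 => [|k hk].
  by rewrite mxE eqxx mul1r addr0.
by rewrite mxE (negbTE hk) mul0r.
Qed.

Lemma sqnorm_delta i : sqnorm (delta i) = 1.
Proof.
rewrite /sqnorm (bigD1 i) //= big1 => [|j hj]; first by rewrite mxE eqxx expr1n addr0.
by rewrite mxE (negbTE hj) expr0n.
Qed.

Lemma trace_bound A (c : R) : (forall x, qf A x <= c * sqnorm x) -> \tr A <= n%:R * c.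
Proof.
move=> h; rewrite /mxtrace.
have -> : n%:R * c = \sum_(i < n) c by rewrite sumr_const card_ord mulr_natl.
apply: ler_sum => i _; have := h (delta i); by rewrite qf_delta sqnorm_delta mulr1.
Qed.

Lemma tr_tens v : \tr (tens v v) = sqnorm v.
Proof. by rewrite /tens mxtrace_mulC /mxtrace big_ord1 dot_mx sqnorm_dot. Qed.

End Delta.

Section Eig.
Variables (R : realType) (n : nat).
Hypothesis n0 : (0 < n)%N.

Lemma sphere_compact : compact [set x : 'rV[R]_n | sqnorm x = 1].
Proof.
apply: (subclosed_compact (B := [set v : 'rV[R]_n | forall i, `[-1, 1]%classic (v ord0 i)])).
- have -> : [set x : 'rV[R]_n | sqnorm x = 1] = (@sqnorm R n) @^-1` [set x | x = 1] by [].
  apply: preimage_closed; last exact: closed_eq.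
  by move=> z _; exact: sqnorm_cont.
- by apply: (@rV_compact _ _ (fun=> `[(-1:R), 1]%classic)) => i; exact: segment_compact.
- move=> x /= hx i; rewrite /= in_itv /=.
  have : x ord0 i ^+ 2 <= 1.
    rewrite -hx /sqnorm (bigD1 i) //= lerDl.
    by apply: sumr_ge0 => j _; rewrite sqr_ge0.
  move=> h; apply/andP; split; nra.
Qed.

Lemma eig_core (A : 'M[R]_n) : A^T = A ->
  exists c : 'rV[R]_n, [/\ c *m A = qf A c *: c, c != 0 &
     forall x, qf A x <= qf A c * sqnorm x].
Proof.
move=> sA.
set S := [set x : 'rV[R]_n | sqnorm x = 1].
have S0 : S !=set0.
  exists (\row_j (j == Ordinal n0)%:R); rewrite /S /= /sqnorm (bigD1 (Ordinal n0)) //= big1.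
    by rewrite !mxE eqxx expr1n addr0.
  by move=> j hj; rewrite !mxE (negbTE hj) expr0n.
have [c cS cmax] := EVT_max_rV S0 sphere_compact (continuous_subspaceT (@qf_cont_x R n A)).
rewrite inE /S /= in cS.
set mu := qf A c.
have bound : forall x, qf A x <= mu * sqnorm x.
  move=> x; have [->|x0] := eqVneq x 0; first by rewrite qf0x sqnorm0 mulr0.
  have s0 := sqnorm_gt0 x0; set s := sqnorm x in s0 *.
  set k := (Num.sqrt s)^-1.
  have hk2 : k ^+ 2 = s^-1 by rewrite /k exprVn sqr_sqrtr // ltW.
  have := cmax (k *: x); rewrite !inE /S /= sqnormZ hk2 mulVf ?gt_eqF //.
  move=> /(_ erefl); rewrite qfZx hk2 => h.
  have -> : qf A x = s * (s^-1 * qf A x) by rewrite mulrA mulfV ?gt_eqF // mul1r.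
  by rewrite mulrC ler_wpM2r // ltW.
set B := mu%:M - A.
have sB : B^T = B by rewrite /B linearB /= tr_scalar_mx sA.
have psd : forall y, 0 <= qf B y by move=> y; rewrite qfB qf_scalar subr_ge0.
have qBc : qf B c = 0 by rewrite qfB qf_scalar cS mulr1 subrr.
have bil0 : forall y, bil B y c = 0.
  move=> y; set b := bil B y c; set q := qf B y.
  have q0 : 0 <= q by exact: psd.
  set t := - b / (q + 1).
  have := psd (c + t *: y).
  rewrite qfDx qBc qfZx (bil_sym (t *: y)) // (bilZr B c t y) (bil_sym c) // -/b -/q add0r.
  have -> : t * b + t * b + t ^+ 2 * q = - ((b ^+ 2 * (q + 2)) / (q + 1) ^+ 2).
    have q1 : q + 1 != 0 by rewrite gt_eqF // ltr_pwDr.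
    by rewrite /t; field.
  rewrite oppr_ge0 => h.
  have q2 : q + 2 != 0 by rewrite gt_eqF // ltr_pwDr.
  have q1 : q + 1 != 0 by rewrite gt_eqF // ltr_pwDr.
  have hb2 : b ^+ 2 <= 0.
    have -> : b ^+ 2 = (b ^+ 2 * (q + 2)) / (q + 1) ^+ 2 * ((q + 1) ^+ 2 / (q + 2)).
      by field; rewrite q1 q2.
    apply: mulr_le0_ge0 => //; apply: divr_ge0; first exact: sqr_ge0.
    by rewrite addr_ge0.
  by apply/eqP; rewrite -sqrf_eq0 eq_le hb2 sqr_ge0.
have col0 : B *m c^T = 0.
  set col := B *m c^T.
  have := bil0 col^T; rewrite /bil -mulmxA -/col -{2}(trmxK col) dot_mx -sqnorm_dot => /sqnorm_eq0 h.
  by rewrite -(trmxK col) h linear0.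
have cB0 : c *m B = 0 by rewrite -[c *m B]trmxK trmx_mul sB col0 linear0.
exists c; split.
- by move: cB0; rewrite /B mulmxBr mul_mx_scalar => /eqP; rewrite subr_eq0 => /eqP <-.
- by apply/eqP => c0; move: cS; rewrite c0 sqnorm0 => /eqP; rewrite eq_sym oner_eq0.
- exact: bound.
Qed.

Lemma lmax_spec (A : 'M[R]_n) : A^T = A ->
  (exists2 c : 'rV[R]_n, c != 0 & qf A c = lambda_max A * sqnorm c) /\
  forall x, qf A x <= lambda_max A * sqnorm x.
Proof.
move=> sA; have [c [cA c0 bnd]] := eig_core sA.
set mu := qf A c in cA bnd.
have Emu : eigenvalue A mu by apply/eigenvalueP; exists c.
have ub : ubound [set a : R | eigenvalue A a] mu.
  move=> a /= /eigenvalueP [v vA v0].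
  have := bnd v; rewrite (eig_qf vA) ler_pM2r //; exact: sqnorm_gt0.
have -> : lambda_max A = mu.
  apply/eqP; rewrite eq_le; apply/andP; split.
    by apply: ge_sup => //; exists mu.
  by apply: sup_upper_bound => //; split; [exists mu|exists mu].
split => //; exists c => //; exact: eig_qf.
Qed.

Lemma lmax_le (A : 'M[R]_n) (k : R) : A^T = A ->
  (lambda_max A <= k <-> forall x, qf A x <= k * sqnorm x).
Proof.
move=> sA; have [[c c0 hc] bnd] := lmax_spec sA; split.
  move=> h x; apply: (le_trans (bnd x)); rewrite ler_wpM2r //; exact: sqnorm_ge0.
move=> h; have := h c; rewrite hc ler_pM2r //; exact: sqnorm_gt0.
Qed.

Lemma lmax_lt (A : 'M[R]_n) (k : R) : A^T = A ->
  (lambda_max A < k <-> forall x, x != 0 -> qf A x < k * sqnorm x).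
Proof.
move=> sA; have [[c c0 hc] bnd] := lmax_spec sA; split.
  move=> h x x0; apply: (le_lt_trans (bnd x)); rewrite ltr_pM2r //; exact: sqnorm_gt0.
move=> h; have := h c c0; rewrite hc ltr_pM2r //; exact: sqnorm_gt0.
Qed.

End Eig.

Section Scalar.
Variable R : realType.

Lemma comb_pos (t X Y : R) : 0 <= t < 1 -> 0 <= X -> 0 < Y -> 0 < t * X + (1 - t) * Y.
Proof.
case/andP => t0 t1 X0 Y0; apply: ltr_wpDl; first exact: mulr_ge0.
by apply: mulr_gt0 => //; rewrite subr_gt0.
Qed.

Lemma cvx_frac (a a' b b' t : R) : 0 <= b -> (b = 0 -> a = 0) -> 0 < b' -> 0 <= t < 1 ->
  (t * a + (1 - t) * a') ^+ 2 / (t * b + (1 - t) * b') <= t * (a ^+ 2 / b) + (1 - t) * (a' ^+ 2 / b').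
Proof.
move=> b0 ba b'0 /andP [t0 t1].
have t1' : 1 - t != 0 by rewrite gt_eqF // subr_gt0.
have b'n : b' != 0 by rewrite gt_eqF.
have [b00|bpos] := eqVneq b 0.
  rewrite b00 (ba b00) !mulr0 !add0r expr0n /= !mul0r !mulr0 add0r.
  rewrite le_eqVlt; apply/orP; left; apply/eqP; field.
  by rewrite ?t1' ?b'n.
have bp : 0 < b by rewrite lt_def bpos b0.
have D0 : 0 < t * b + (1 - t) * b' by apply: comb_pos => //; apply/andP.
have Dn : t * b + (1 - t) * b' != 0 by rewrite gt_eqF.
rewrite -subr_ge0.
have -> : t * (a ^+ 2 / b) + (1 - t) * (a' ^+ 2 / b') -
   (t * a + (1 - t) * a') ^+ 2 / (t * b + (1 - t) * b') =
   t * (1 - t) * (a * b' - a' * b) ^+ 2 / (b * b' * (t * b + (1 - t) * b')).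
  by field; rewrite ?Dn ?bpos ?b'n.
have h1 : 0 <= t * (1 - t) * (a * b' - a' * b) ^+ 2.
  by rewrite mulr_ge0 ?sqr_ge0 // mulr_ge0 // subr_ge0 ltW.
have h2 : 0 <= b * b' * (t * b + (1 - t) * b') by rewrite !mulr_ge0 // ltW.
exact: divr_ge0.
Qed.

Variable n : nat.

Lemma P_mix (a b : 'rV[R]_n) (be be' t k : R) : 0 <= be -> 0 < be' -> 0 <= t < 1 ->
  sqnorm a <= k * be ^+ 2 -> sqnorm b < k * be' ^+ 2 ->
  sqnorm (t *: a + (1 - t) *: b) < k * (t * be + (1 - t) * be') ^+ 2.
Proof.
move=> be0 be'0 /andP [t0 t1] ha hb.
have t1' : 0 < 1 - t by rewrite subr_gt0.
rewrite sqnorm_comb.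
have hB : (1 - t) ^+ 2 * sqnorm b < (1 - t) ^+ 2 * (k * be' ^+ 2).
  by rewrite ltr_pM2l // exprn_gt0.
have [be00|bepos] := eqVneq be 0.
  move: ha; rewrite be00 expr0n /= mulr0 => /sqnorm_le0 ->.
  rewrite sqnorm0 dot0l; lra.
have bp : 0 < be by rewrite lt_def bepos be0.
have key : 2 * be * be' * dot a b <= be' ^+ 2 * sqnorm a + be ^+ 2 * sqnorm b.
  have := sqnorm_ge0 (be' *: a - be *: b).
  rewrite sqnorm_dot !dotDr !dotDl !dotNr !dotNl !dotZr !dotZl (dotC b a) -!sqnorm_dot.
  move=> h; rewrite -subr_ge0; apply: (le_trans h); rewrite le_eqVlt; apply/orP; left.
  apply/eqP; ring.
have h1 : be' ^+ 2 * sqnorm a <= be' ^+ 2 * (k * be ^+ 2) by rewrite ler_wpM2l // sqr_ge0.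
have h2 : be ^+ 2 * sqnorm b < be ^+ 2 * (k * be' ^+ 2) by rewrite ltr_pM2l // exprn_gt0.
have hD : dot a b < k * be * be'.
  have hp : 0 < 2 * be * be' by rewrite !mulr_gt0.
  rewrite -(ltr_pM2l hp); lra.
have hA : t ^+ 2 * sqnorm a <= t ^+ 2 * (k * be ^+ 2) by rewrite ler_wpM2l // sqr_ge0.
have hD' : 2 * t * (1 - t) * dot a b <= 2 * t * (1 - t) * (k * be * be').
  have p : 0 <= 2 * t * (1 - t) by rewrite !mulr_ge0 // ltW.
  by rewrite ler_wpM2l // ltW.
lra.
Qed.

End Scalar.

Section Main.
Variables (R : realType) (n : nat) (e : R -> R) (a0 b0 : R).
Hypothesis n2 : (2 <= n)%N.
Hypothesis he : forall r, e r = a0 + b0 * r.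
Hypothesis e1 : 0 < e 1.
Hypothesis em1 : 0 < e (-1).

Let n0 : (0 < n)%N. Proof. by apply: leq_trans n2. Qed.
Let nR : 0 < n%:R :> R. Proof. by rewrite ltr0n n0. Qed.

Lemma e_comb (t r r' : R) : e (t * r + (1 - t) * r') = t * e r + (1 - t) * e r'.
Proof. rewrite !he; ring. Qed.

Lemma e0 : 0 < e 0.
Proof.
have -> : e 0 = (e 1 + e (-1)) / 2 by rewrite !he; field.
by apply: divr_gt0 => //; rewrite addr_gt0.
Qed.

Definition Nq (r : R) (v m : 'rV[R]_n) (s : 'M[R]_n) (x : 'rV[R]_n) : R :=
  ((dot x m + dot x v) ^+ 2 / (1 + r) + (dot x m - dot x v) ^+ 2 / (1 - r)) / 2 - qf s x.

Definition Us (z : Z R n) : Prop :=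
  let: (r, v, m, s, p) := z in
  [/\ S0 s, -1 < r < 1, sqnorm (m + v) < e 1 * (n%:R * (r + 1) ^+ 2),
      sqnorm (m - v) < e (-1) * (n%:R * (r - 1) ^+ 2) &
      forall x, x != 0 -> Nq r v m s x < e r * sqnorm x].

Definition Ns (z : Z R n) : Prop :=
  let: (r, v, m, s, p) := z in
  [/\ S0 s, -1 <= r <= 1, sqnorm (m + v) <= e 1 * (n%:R * (r + 1) ^+ 2),
      sqnorm (m - v) <= e (-1) * (n%:R * (r - 1) ^+ 2) &
      forall x, Nq r v m s x <= e r * sqnorm x].

Lemma tens_tr (a b : 'rV[R]_n) : (tens a b)^T = tens b a.
Proof. by rewrite /tens trmx_mul trmxK. Qed.

Lemma Mz_sym r v m s p : S0 s -> (@Mz R n (r, v, m, s, p))^T = @Mz R n (r, v, m, s, p).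
Proof.
case=> ss _.
have L : forall (c d : R) (X Y W S : 'M[R]_n),
    (c *: (X - d *: Y + W) - S)^T = c *: (X^T - d *: Y^T + W^T) - S^T.
  move=> c d X Y W S.
  by rewrite linearB /= linearZ /= linearD /= linearB /= linearZ /=.
have L2 : (tens m v + tens v m)^T = tens m v + tens v m by rewrite linearD /= !tens_tr addrC.
by rewrite /Mz L L2 !tens_tr ss.
Qed.

Lemma qf_Mz r v m s p x : -1 < r < 1 -> qf (@Mz R n (r, v, m, s, p)) x = Nq r v m s x.
Proof.
case/andP => r1 r2.
have h1 : 1 + r != 0 by rewrite gt_eqF //; lra.
have h2 : 1 - r != 0 by rewrite gt_eqF //; lra.
have h3 : 1 - r ^+ 2 != 0.
  have -> : 1 - r ^+ 2 = (1 + r) * (1 - r) by ring.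
  by rewrite mulf_neq0.
rewrite /Mz /Nq qfB qfZ !qfD qfN qfZ qfD !qf_tens; field.
by rewrite ?h1 ?h2 ?h3.
Qed.

Lemma Us_iff z : Uset e z <-> Us z.
Proof.
case: z => [[[[r v] m] s] p] /=.
split.
- case=> [S [rr [Tp [Tm Q]]]].
  have /andP [r1 r2] := rr.
  have b1 : 0 < n%:R * (r + 1) ^+ 2 :> R.
    by rewrite mulr_gt0 // exprn_gt0 //; lra.
  have b2 : 0 < n%:R * (r - 1) ^+ 2 :> R.
    by rewrite mulr_gt0 // -sqrrN opprB exprn_gt0 //; lra.
  split => //.
  + by move: Tp; rewrite /Tplus ltr_pdivrMr.
  + by move: Tm; rewrite /Tminus ltr_pdivrMr.
  + move: Q; rewrite /Qz (lmax_lt n0 _ (@Mz_sym r v m s p S)) => Q x x0.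
    by rewrite -(@qf_Mz r v m s p x rr); apply: Q.
- case=> S rr Tp Tm Q.
  have /andP [r1 r2] := rr.
  have b1 : 0 < n%:R * (r + 1) ^+ 2 :> R.
    by rewrite mulr_gt0 // exprn_gt0 //; lra.
  have b2 : 0 < n%:R * (r - 1) ^+ 2 :> R.
    by rewrite mulr_gt0 // -sqrrN opprB exprn_gt0 //; lra.
  split => //; split => //; split; first by rewrite /Tplus ltr_pdivrMr.
  split; first by rewrite /Tminus ltr_pdivrMr.
  rewrite /Qz (lmax_lt n0 _ (@Mz_sym r v m s p S)) => x x0.
  by rewrite (@qf_Mz r v m s p x rr); apply: Q.
Qed.

Lemma Nq0 r v m s : Nq r v m s 0 = 0.
Proof. rewrite /Nq qf0x /dot !big1 =>[|i _|i _]; rewrite ?mxE ?mul0r //; rewrite ?expr0n /=; lra. Qed.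

Lemma Us_Ns z : Us z -> Ns z.
Proof.
case: z => [[[[r v] m] s] p] /= [S /andP [r1 r2] Tp Tm Q]; split => //.
- by rewrite !ltW.
- exact: ltW.
- exact: ltW.
- move=> x; have [->|x0] := eqVneq x 0; first by rewrite Nq0 sqnorm0 mulr0.
  exact/ltW/Q.
Qed.


Lemma combE (t r r' p p' : R) (v m v' m' : 'rV[R]_n) (s s' : 'M[R]_n) :
  t *: ((r, v, m, s, p) : Z R n) + (1 - t) *: ((r', v', m', s', p') : Z R n) =
  (t * r + (1 - t) * r', t *: v + (1 - t) *: v', t *: m + (1 - t) *: m',
   t *: s + (1 - t) *: s', t * p + (1 - t) * p').
Proof. by []. Qed.

Lemma fin_ineq (t L1 L2 X1 X2 Y1 Y2 q q' E E' S : R) : 0 <= t < 1 ->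
  L1 <= t * X1 + (1 - t) * Y1 -> L2 <= t * X2 + (1 - t) * Y2 ->
  (X1 + X2) / 2 - q <= E * S -> (Y1 + Y2) / 2 - q' < E' * S ->
  (L1 + L2) / 2 - (t * q + (1 - t) * q') < (t * E + (1 - t) * E') * S.
Proof.
case/andP => t0 t1 h1 h2 h3 h4.
have t1' : 0 < 1 - t by rewrite subr_gt0.
have h3' := ler_wpM2l t0 h3.
have h4' : (1 - t) * ((Y1 + Y2) / 2 - q') < (1 - t) * (E' * S) by rewrite ltr_pM2l.
lra.
Qed.

Lemma mix z w t : Ns z -> Us w -> 0 <= t < 1 -> Us (t *: z + (1 - t) *: w).
Proof.
case: z => [[[[r v] m] s] p]; case: w => [[[[r' v'] m'] s'] p'].
move=> [[ss ts] /andP [r1 r2] P1 P2 P3] [[ss' ts'] /andP [r1' r2'] P1' P2' P3'] ht.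
have /andP [t0 t1] := ht.
rewrite combE; split.
- split; first by rewrite linearD /= !linearZ /= ss ss'.
  by rewrite mxtraceD !mxtraceZ ts ts' !mulr0 addr0.
- have := @comb_pos R t (r + 1) (r' + 1) ht.
  have := @comb_pos R t (1 - r) (1 - r') ht.
  move=> h1 h2; apply/andP; split.
    suff : 0 < t * (r + 1) + (1 - t) * (r' + 1) by lra.
    by apply: h2; lra.
  suff : 0 < t * (1 - r) + (1 - t) * (1 - r') by lra.
  by apply: h1; lra.
- have -> : t *: m + (1 - t) *: m' + (t *: v + (1 - t) *: v') = t *: (m + v) + (1 - t) *: (m' + v').
    by rewrite !scalerDr addrACA.
  have -> : t * r + (1 - t) * r' + 1 = t * (r + 1) + (1 - t) * (r' + 1) by ring.
  rewrite mulrA; apply: P_mix => //; first by lra.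
  + lra.
  + by rewrite -mulrA.
  + by rewrite -mulrA.
- have -> : t *: m + (1 - t) *: m' - (t *: v + (1 - t) *: v') = t *: (m - v) + (1 - t) *: (m' - v').
    by rewrite !scalerBr opprD addrACA.
  have -> : (t * r + (1 - t) * r' - 1) ^+ 2 = (t * (1 - r) + (1 - t) * (1 - r')) ^+ 2 by ring.
  rewrite mulrA; apply: P_mix => //; first by lra.
  + lra.
  + by rewrite -mulrA -sqrrN opprB.
  + by rewrite -mulrA -sqrrN opprB.
- move=> x x0; rewrite e_comb.
  have E1 := P3 x; have E2 := P3' x x0.
  move: E1 E2; rewrite /Nq !dotDr !dotZr qfD !qfZ => E1 E2.
  apply: (fin_ineq ht _ _ E1 E2).
  + have -> : t * dot x m + (1 - t) * dot x m' + (t * dot x v + (1 - t) * dot x v') =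
        t * (dot x m + dot x v) + (1 - t) * (dot x m' + dot x v') by ring.
    have -> : 1 + (t * r + (1 - t) * r') = t * (1 + r) + (1 - t) * (1 + r') by ring.
    apply: cvx_frac => //; first by lra.
    * move=> hr; have hr' : r = -1 by lra.
      move: P1; rewrite hr' addNr expr0n /= !mulr0 => /sqnorm_le0 /eqP.
      by rewrite addr_eq0 => /eqP ->; rewrite dotNr addNr.
    * lra.
  + have -> : t * dot x m + (1 - t) * dot x m' - (t * dot x v + (1 - t) * dot x v') =
        t * (dot x m - dot x v) + (1 - t) * (dot x m' - dot x v') by ring.
    have -> : 1 - (t * r + (1 - t) * r') = t * (1 - r) + (1 - t) * (1 - r') by ring.
    apply: cvx_frac => //; first by lra.
    * move=> hr; have hr' : r = 1 by lra.
      move: P2; rewrite hr' subrr expr0n /= !mulr0 => /sqnorm_le0 /eqP.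
      by rewrite subr_eq0 => /eqP ->; rewrite subrr.
    * lra.
Qed.

Lemma Us0 : Us ((0 : R), (0 : 'rV[R]_n), (0 : 'rV[R]_n), (0 : 'M[R]_n), (0 : R)).
Proof.
split.
- by split; [rewrite trmx0 | rewrite mxtrace0].
- by apply/andP; split; lra.
- rewrite addr0 sqnorm0 add0r expr1n mulr1; exact: mulr_gt0.
- rewrite subr0 sqnorm0 sub0r sqrrN expr1n mulr1; exact: mulr_gt0.
- move=> x x0; have hq : qf (0 : 'M[R]_n) x = 0 by rewrite /qf mulmx0 mul0mx mxE.
  rewrite /Nq !dot0r hq subrr !addr0 subr0 expr0n /= !mul0r addr0 mul0r.
  by apply: mulr_gt0; [exact: e0 | exact: sqnorm_gt0].
Qed.


Lemma U0_N z : U0bar e z -> Ns z.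
Proof.
case: z => [[[[r v] m] s] p] /= [S [rr [Tp [Tm Q]]]].
have /andP [r1 r2] := rr.
have b1 : 0 < n%:R * (r + 1) ^+ 2 :> R by rewrite mulr_gt0 // exprn_gt0 //; lra.
have b2 : 0 < n%:R * (r - 1) ^+ 2 :> R by rewrite mulr_gt0 // -sqrrN opprB exprn_gt0 //; lra.
split => //.
- by apply/andP; split; lra.
- by move: Tp; rewrite /Tplus ler_pdivrMr.
- by move: Tm; rewrite /Tminus ler_pdivrMr.
- move: Q; rewrite /Qz (lmax_le n0 _ (@Mz_sym r v m s p S)) => Q x.
  by rewrite -(@qf_Mz r v m s p x rr); apply: Q.
Qed.

Lemma tvs_sym (v : 'rV[R]_n) s : S0 s -> (tens v v - s)^T = tens v v - s.
Proof. by case=> ss _; rewrite linearB /= tens_tr ss. Qed.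

Lemma Kp_N z : Kplus' e z -> Ns z.
Proof.
case: z => [[[[r v] m] s] p] /= [S [-> [-> L]]].
move: L; rewrite (lmax_le n0 _ (tvs_sym v S)) => L.
have tb := trace_bound L.
move: tb; rewrite raddfB /= tr_tens; case: S => [ss ts] => /=; rewrite ts subr0 => tb.
split => //.
- by apply/andP; split; lra.
- have -> : sqnorm (v + v) = 4 * sqnorm v by rewrite !sqnorm_dot !dotDr !dotDl; ring.
  lra.
- by rewrite subrr sqnorm0 subrr expr0n /= !mulr0.
- move=> x; have := L x; rewrite qfB qf_tens /Nq subrr expr0n /= mul0r addr0.
  have -> : (dot x v + dot x v) ^+ 2 / (1 + 1) / 2 = dot x v * dot x v by field.
  done.
Qed.

Lemma Km_N z : Kminus' e z -> Ns z.
Proof.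
case: z => [[[[r v] m] s] p] /= [S [-> [-> L]]].
move: L; rewrite (lmax_le n0 _ (tvs_sym v S)) => L.
have tb := trace_bound L.
move: tb; rewrite raddfB /= tr_tens; case: S => [ss ts] => /=; rewrite ts subr0 => tb.
split => //.
- by apply/andP; split; lra.
- by rewrite addNr sqnorm0 addNr expr0n /= !mulr0.
- have -> : sqnorm (- v - v) = 4 * sqnorm v.
    by rewrite !sqnorm_dot !dotDr !dotDl !dotNr !dotNl; ring.
  lra.
- move=> x; have := L x; rewrite qfB qf_tens /Nq dotNr addNr expr0n /= mul0r add0r.
  have -> : (- dot x v - dot x v) ^+ 2 / (1 - -1) / 2 = dot x v * dot x v by field.
  done.
Qed.


Lemma cr : continuous (fun z : Z R n => z.1.1.1.1).
Proof.
move=> z; apply: (continuous_comp (f := fun z : Z R n => z.1.1.1) (g := fst)); last exact: cvg_fst.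
apply: (continuous_comp (f := fun z : Z R n => z.1.1) (g := fst)); last exact: cvg_fst.
apply: (continuous_comp (f := fst) (g := fst)); exact: cvg_fst.
Qed.

Lemma cv : continuous (fun z : Z R n => z.1.1.1.2).
Proof.
move=> z; apply: (continuous_comp (f := fun z : Z R n => z.1.1.1) (g := snd)); last exact: cvg_snd.
apply: (continuous_comp (f := fun z : Z R n => z.1.1) (g := fst)); last exact: cvg_fst.
apply: (continuous_comp (f := fst) (g := fst)); exact: cvg_fst.
Qed.

Lemma cm : continuous (fun z : Z R n => z.1.1.2).
Proof.
move=> z; apply: (continuous_comp (f := fun z : Z R n => z.1.1) (g := snd)); last exact: cvg_snd.
apply: (continuous_comp (f := fst) (g := fst)); exact: cvg_fst.
Qed.

Lemma cs : continuous (fun z : Z R n => z.1.2).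
Proof.
move=> z; apply: (continuous_comp (f := fst) (g := snd)); [exact: cvg_fst | exact: cvg_snd].
Qed.

Lemma ccomp {A B C : topologicalType} (f : A -> B) (g : B -> C) :
  continuous f -> continuous g -> continuous (fun z => g (f z)).
Proof. by move=> hf hg z; apply: continuous_comp; [exact: hf | exact: hg]. Qed.

Lemma ce : continuous (fun z : Z R n => e z.1.1.1.1).
Proof.
have -> : (fun z : Z R n => e z.1.1.1.1) = (fun z => a0 + b0 * z.1.1.1.1).
  by apply: funext => z; rewrite he.
apply: cont_add; first exact: cst_continuous.
by apply: cont_mul; [exact: cst_continuous | exact: cr].
Qed.

Lemma csq {T : topologicalType} (f : T -> R) : continuous f -> continuous (fun z => f z ^+ 2).
Proof.
move=> hf; have -> : (fun z => f z ^+ 2) = (fun z => f z * f z) by apply: funext => z; rewrite expr2.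
exact: cont_mul.
Qed.

Lemma cmpv : continuous (fun z : Z R n => z.1.1.2 + z.1.1.1.2).
Proof. move=> z; have := continuousD (f := fun z : Z R n => z.1.1.2) (g := fun z : Z R n => z.1.1.1.2) (x := z) (@cm z) (@cv z). exact. Qed.

Lemma cmmv : continuous (fun z : Z R n => z.1.1.2 - z.1.1.1.2).
Proof. move=> z; have := continuousB (f := fun z : Z R n => z.1.1.2) (g := fun z : Z R n => z.1.1.1.2) (x := z) (@cm z) (@cv z). exact. Qed.

Lemma clos_prop (C : set (Z R n)) : closed C -> (forall z, Us z -> C z) ->
  closure (Uset e) `<=` C.
Proof.
move=> cC hU z hz; apply: cC; apply: (closureS _ hz) => w /Us_iff; exact: hU.
Qed.

Lemma Us_r z : Us z -> -1 < z.1.1.1.1 < 1.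
Proof. by case: z => [[[[r v] m] s] p] /= []. Qed.

Lemma cl_sym (i j : 'I_n) : closure (Uset e) `<=` [set z : Z R n | z.1.2 i j = z.1.2 j i].
Proof.
apply: clos_prop.
  by apply: closed_eqfun; [exact: (ccomp cs (@coord_continuous R n n i j)) | exact: (ccomp cs (@coord_continuous R n n j i))].
by case=> [[[[r v] m] s] p] /= [[ss _] _ _ _ _]; rewrite -[in LHS]ss mxE.
Qed.

Lemma cl_tr : closure (Uset e) `<=` [set z : Z R n | \tr z.1.2 = 0].
Proof.
apply: clos_prop.
  apply: closed_eqfun; last exact: cst_continuous.
  apply: (ccomp cs); rewrite /mxtrace; apply: cont_sum => i; exact: coord_continuous.
by case=> [[[[r v] m] s] p] /= [[_ ts] _ _ _ _].
Qed.

Lemma cl_r1 : closure (Uset e) `<=` [set z : Z R n | -1 <= z.1.1.1.1].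
Proof.
apply: clos_prop; first by apply: closed_lefun; [exact: cst_continuous | exact: cr].
by move=> z /Us_r /andP [h _]; exact: ltW.
Qed.

Lemma cl_r2 : closure (Uset e) `<=` [set z : Z R n | z.1.1.1.1 <= 1].
Proof.
apply: clos_prop; first by apply: closed_lefun; [exact: cr | exact: cst_continuous].
by move=> z /Us_r /andP [_ h]; exact: ltW.
Qed.

Lemma cl_P1 : closure (Uset e) `<=`
  [set z : Z R n | sqnorm (z.1.1.2 + z.1.1.1.2) <= e 1 * (n%:R * (z.1.1.1.1 + 1) ^+ 2)].
Proof.
apply: clos_prop.
  apply: closed_lefun; first by exact: (ccomp cmpv (@sqnorm_cont R n)).
  apply: cont_mul; first exact: cst_continuous.
  apply: cont_mul; first exact: cst_continuous.
  by apply: csq; apply: cont_add; [exact: cr | exact: cst_continuous].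
by case=> [[[[r v] m] s] p] /= [_ _ h _ _]; exact: ltW.
Qed.

Lemma cl_P2 : closure (Uset e) `<=`
  [set z : Z R n | sqnorm (z.1.1.2 - z.1.1.1.2) <= e (-1) * (n%:R * (z.1.1.1.1 - 1) ^+ 2)].
Proof.
apply: clos_prop.
  apply: closed_lefun; first by exact: (ccomp cmmv (@sqnorm_cont R n)).
  apply: cont_mul; first exact: cst_continuous.
  apply: cont_mul; first exact: cst_continuous.
  by apply: csq; apply: cont_add; [exact: cr | exact: cst_continuous].
by case=> [[[[r v] m] s] p] /= [_ _ _ h _]; exact: ltW.
Qed.

Lemma cl_f x : closure (Uset e) `<=`
  [set z : Z R n | (1 - z.1.1.1.1) * (dot x z.1.1.2 + dot x z.1.1.1.2) ^+ 2
           + (1 + z.1.1.1.1) * (dot x z.1.1.2 - dot x z.1.1.1.2) ^+ 2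
           <= 2 * (1 - z.1.1.1.1) * (1 + z.1.1.1.1) * (qf z.1.2 x + e z.1.1.1.1 * sqnorm x)].
Proof.
have cdm : continuous (fun z : Z R n => dot x z.1.1.2) by exact: (ccomp cm (@dot_cont R n x)).
have cdv : continuous (fun z : Z R n => dot x z.1.1.1.2) by exact: (ccomp cv (@dot_cont R n x)).
have c1r : continuous (fun z : Z R n => 1 - z.1.1.1.1).
  by apply: cont_add; [exact: cst_continuous | apply: cont_opp; exact: cr].
have c1r' : continuous (fun z : Z R n => 1 + z.1.1.1.1).
  by apply: cont_add; [exact: cst_continuous | exact: cr].
apply: clos_prop.
  apply: closed_lefun.
    apply: cont_add; (apply: cont_mul; last apply: csq) => //.
      exact: cont_add.
    by apply: cont_add => //; exact: cont_opp.
  apply: cont_mul; first by apply: cont_mul => //; apply: cont_mul => //; exact: cst_continuous.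
  apply: cont_add; first by exact: (ccomp cs (@qf_cont_A R n x)).
  by apply: cont_mul; [exact: ce | exact: cst_continuous].
case=> [[[[r v] m] s] p] hU; have [_ /andP [r1 r2] _ _ _] := hU.
have [_ _ _ _ hN] := Us_Ns hU; have := hN x; rewrite /Nq /=.
set a := dot x m; set b := dot x v; set q := qf s x; set E := e r * sqnorm x => h.
have h1 : 1 + r != 0 by rewrite gt_eqF //; lra.
have h2 : 1 - r != 0 by rewrite gt_eqF //; lra.
have hp : 0 < 2 * (1 - r) * (1 + r) by rewrite !mulr_gt0 //; lra.
have -> : (1 - r) * (a + b) ^+ 2 + (1 + r) * (a - b) ^+ 2 =
  2 * (1 - r) * (1 + r) * (((a + b) ^+ 2 / (1 + r) + (a - b) ^+ 2 / (1 - r)) / 2 - q + q).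
  by field; rewrite ?h1 ?h2.
by rewrite ler_pM2l // addrC lerD2l.
Qed.

Lemma cl_g x : closure (Uset e) `<=`
  [set z : Z R n | (dot x z.1.1.2) ^+ 2 - qf z.1.2 x <= e z.1.1.1.1 * sqnorm x].
Proof.
have cdm : continuous (fun z : Z R n => dot x z.1.1.2) by exact: (ccomp cm (@dot_cont R n x)).
apply: clos_prop.
  apply: closed_lefun.
    apply: cont_add; first exact: csq.
    by apply: cont_opp; exact: (ccomp cs (@qf_cont_A R n x)).
  by apply: cont_mul; [exact: ce | exact: cst_continuous].
case=> [[[[r v] m] s] p] hU; have [_ /andP [r1 r2] _ _ _] := hU.
have [_ _ _ _ hN] := Us_Ns hU; have := hN x; rewrite /Nq /=.
set a := dot x m; set b := dot x v; set q := qf s x; set E := e r * sqnorm x => h.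
apply: le_trans h.
have h1 : 1 + r != 0 by rewrite gt_eqF //; lra.
have h2 : 1 - r != 0 by rewrite gt_eqF //; lra.
rewrite -subr_ge0.
have -> : ((a + b) ^+ 2 / (1 + r) + (a - b) ^+ 2 / (1 - r)) / 2 - q - (a ^+ 2 - q) =
   (b - r * a) ^+ 2 / ((1 + r) * (1 - r)).
  by field; rewrite ?h1 ?h2.
by apply: divr_ge0; [exact: sqr_ge0 | rewrite mulr_ge0 //; lra].
Qed.


Lemma Ns_clos z : Ns z -> closure (Uset e) z.
Proof.
move=> hN B hB.
have hc : (fun k : R => k *: z) @ (nbhs (1 : R)) --> z.
  have := @scalel_continuous R (Z R n) z 1.
  by move=> h; rewrite -[in X in _ --> X](scale1r z); exact: h.
have := hc B hB; case/nbhs_ballP => eps eps0 hball.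
set u := eps / (eps + 1).
move: eps0 => /= eps0. have ep1 : 0 < eps + 1 by lra.
have u0 : 0 < u by rewrite divr_gt0.
have u1 : u < 1 by rewrite /u ltr_pdivrMr // mul1r; lra.
have ue : u <= eps by rewrite /u ler_pdivrMr //; nra.
set d := u / 2.
exists ((1 - d) *: z); split.
- apply/Us_iff.
  have ht : 0 <= 1 - d < 1 by apply/andP; split; rewrite /d; lra.
  have := mix hN Us0 ht.
  have -> : ((0 : R), (0 : 'rV[R]_n), (0 : 'rV[R]_n), (0 : 'M[R]_n), (0 : R)) = (0 : Z R n) by [].
  by rewrite scaler0 addr0.
- apply: hball; rewrite -ball_normE /ball_ /=.
  have -> : 1 - (1 - d) = d by ring.
  rewrite gtr0_norm /d; lra.
Qed.


Lemma clos_sub z : closure (@Uset R n e) z -> (@Kminus' R n e `|` @U0bar R n e `|` @Kplus' R n e) z.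
Proof.
case: z => [[[[r v] m] s] p] hz.
have ss : s^T = s.
  by apply/matrixP => i j; rewrite mxE; have := cl_sym j i hz.
have ts : \tr s = 0 by have := cl_tr hz.
have S : S0 s by [].
have r1 : -1 <= r by have := cl_r1 hz.
have r2 : r <= 1 by have := cl_r2 hz.
have P1 : sqnorm (m + v) <= e 1 * (n%:R * (r + 1) ^+ 2) by have := cl_P1 hz.
have P2 : sqnorm (m - v) <= e (-1) * (n%:R * (r - 1) ^+ 2) by have := cl_P2 hz.
have F : forall x, (1 - r) * (dot x m + dot x v) ^+ 2 + (1 + r) * (dot x m - dot x v) ^+ 2
           <= 2 * (1 - r) * (1 + r) * (qf s x + e r * sqnorm x).
  by move=> x; have := cl_f x hz.
have G : forall x, (dot x m) ^+ 2 - qf s x <= e r * sqnorm x.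
  by move=> x; have := cl_g x hz.
have [re1|rne1] := eqVneq r 1.
  right; split => //; split => //.
  have mv : m = v.
    by apply: subr0_eq; apply: sqnorm_le0; move: P2; rewrite re1 subrr expr0n /= !mulr0.
  split => //; apply/(lmax_le n0 _ (tvs_sym v S)) => x.
  by have := G x; rewrite mv re1 qfB qf_tens expr2.
have [rem1|rnem1] := eqVneq r (-1).
  left; left; split => //; split => //.
  have mv : m = - v.
    apply/eqP; rewrite -addr_eq0; apply/eqP; apply: sqnorm_le0.
    by move: P1; rewrite rem1 addNr expr0n /= !mulr0.
  split => //; apply/(lmax_le n0 _ (tvs_sym v S)) => x.
  by have := G x; rewrite mv rem1 qfB qf_tens dotNr sqrrN expr2.
have rr : -1 < r < 1.
  by apply/andP; split; rewrite lt_neqAle ?r1 ?r2 ?andbT // eq_sym.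
have /andP [r1' r2'] := rr.
have b1 : 0 < n%:R * (r + 1) ^+ 2 :> R by rewrite mulr_gt0 // exprn_gt0 //; lra.
have b2 : 0 < n%:R * (r - 1) ^+ 2 :> R by rewrite mulr_gt0 // -sqrrN opprB exprn_gt0 //; lra.
left; right; split => //; split => //; split; first by rewrite /Tplus ler_pdivrMr.
split; first by rewrite /Tminus ler_pdivrMr.
rewrite /Qz (lmax_le n0 _ (@Mz_sym r v m s p S)) => x.
rewrite (@qf_Mz r v m s p x rr) /Nq.
have := F x.
set a := dot x m; set b := dot x v; set q := qf s x; set E := e r * sqnorm x => h.
have h1 : 1 + r != 0 by rewrite gt_eqF //; lra.
have h2 : 1 - r != 0 by rewrite gt_eqF //; lra.
have hp : 0 < 2 * (1 - r) * (1 + r) by rewrite !mulr_gt0 //; lra.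
rewrite -subr_le0.
have -> : ((a + b) ^+ 2 / (1 + r) + (a - b) ^+ 2 / (1 - r)) / 2 - q - E =
   ((1 - r) * (a + b) ^+ 2 + (1 + r) * (a - b) ^+ 2 - 2 * (1 - r) * (1 + r) * (q + E))
   / (2 * (1 - r) * (1 + r)).
  by field; rewrite ?h1 ?h2.
by rewrite ler_pdivrMr // mul0r subr_le0.
Qed.

Lemma main_sec :
  convex_in (@Uset R n e) /\
  closure (@Uset R n e) = @Kminus' R n e `|` @U0bar R n e `|` @Kplus' R n e /\
  @Kset R n e `<=` closure (@Uset R n e).
Proof.
split; [|split].
- move=> z w t hz hw /andP [t0 t1].
  have [->|tne] := eqVneq t 1.
    by rewrite subrr scale0r addr0 scale1r.
  have ht : 0 <= t < 1 by rewrite t0 lt_neqAle tne t1.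
  by apply/Us_iff; apply: mix; [apply: Us_Ns; exact/Us_iff | exact/Us_iff | exact: ht].
- apply/seteqP; split; first by move=> z hz; exact: clos_sub.
  by move=> z [[h|h]|h]; apply: Ns_clos; [exact: Km_N | exact: U0_N | exact: Kp_N].
- case=> [[[[r v] m] s] p] /= [S [hr [hm hK]]].
  have L : lambda_max (tens v v - s) <= e r.
    rewrite hK; apply/(lmax_le n0 _ _); first by rewrite linearZ /= trmx1.
    by move=> x; rewrite qf_sc1.
  apply: Ns_clos; case: hr => hr; move: hm L; rewrite hr => hm L.
  + by apply: Kp_N; split => //; split => //; rewrite hm scale1r.
  + by apply: Km_N; split => //; split => //; rewrite hm scaleN1r.
Qed.

End Main.

Unset Implicit Arguments.
Set Strict Implicit.

Theorem lemma3p8 (R : realType) (n : nat) (e : R -> R) :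
  (2 <= n)%N -> affine e -> 0 < e 1 -> 0 < e (-1) ->
  convex_in (@Uset R n e) /\
  closure (@Uset R n e) = @Kminus' R n e `|` @U0bar R n e `|` @Kplus' R n e /\
  @Kset R n e `<=` closure (@Uset R n e).
Proof.
move=> n2 [a0 [b0 he]] e1 em1.
exact: (@main_sec R n e a0 b0 n2 he e1 em1).
Qed.
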